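(* For every unital algebra $A$ we have $\mathfrak{P}^{\mathrm{c}}(A)=\mathfrak{P}^{\mathrm{cu}}(A)$ and $\mathfrak{P}^{\mathrm{cr}}(A)=\mathfrak{P}^{\mathrm{cur}}(A)$.
   Context: Fix a field $\mathbb{F}$; algebras are associative $\mathbb{F}$-algebras. $\mathbf{A}_{\mathrm{c}},\mathbf{A}_{\mathrm{cr}}$: commutative, resp. commutative reduced (no nonzero nilpotents) algebras, not necessarily unital; $\mathbf{A}_{\mathrm{cu}},\mathbf{A}_{\mathrm{cur}}$: commutative, resp. commutative reduced unital algebras. For $*\in\{\mathrm{c},\mathrm{cr}\}$ and any algebra $A$, $\mathfrak{P}^*(A)$ is the set of $a\in A$ such that for every $C\in\mathbf{A}_*$ and every algebra morphism $\varphi:A\to C[x]$, $\varphi(a)\in C$ (is a constant polynomial). For $*\in\{\mathrm{cu},\mathrm{cur}\}$ and a unital algebra $A$, $\mathfrak{P}^*(A)$ is the set of $a\in A$ such that for every $C\in\mathbf{A}_*$ and every unit-preserving morphism $\varphi:A\to C[x]$, $\varphi(a)\in C$. (The paper defines these sets via universal pro-algebras $\mathfrak{M}^*_{A,\mathbb{F}[x]}$ and proves they coincide with the descriptions given.) *)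

(* Defs.v *)
From HB Require Import structures.
From mathcomp Require Import all_boot all_order all_algebra.
Set Implicit Arguments. Unset Strict Implicit. Unset Printing Implicit Defensive.
Import Order.TTheory GRing.Theory Num.Theory.
Local Open Scope ring_scope.

(* Associative F-algebras, NOT necessarily unital (MathComp's ring/algebra
   structures are all unital and nontrivial, so we use an explicit record on
   top of an F-vector space). *)
Record algebra (F : fieldType) := Algebra {
  alg_car :> lmodType F;
  amul : alg_car -> alg_car -> alg_car;
  amulA : forall x y z, amul x (amul y z) = amul (amul x y) z;
  amulDl : forall x y z, amul (x + y) z = amul x z + amul y z;
  amulDr : forall x y z, amul x (y + z) = amul x y + amul x z;
  amulZl : forall (k : F) x y, amul (k *: x) y = k *: amul x y;
  amulZr : forall (k : F) x y, amul x (k *: y) = k *: amul x y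
}.

(* Unital algebras (the unit may be 0, i.e. the zero algebra is allowed). *)
Record ualgebra (F : fieldType) := UAlgebra {
  ualg :> algebra F;
  aone : ualg;
  amul1l : forall x, amul aone x = x;
  amul1r : forall x, amul x aone = x
}.

Definition commutative_alg (F : fieldType) (C : algebra F) : Prop :=
  forall x y : C, amul x y = amul y x.

(* x^(n+1) *)
Definition apow (F : fieldType) (C : algebra F) (x : C) (n : nat) : C :=
  iter n (amul x) x.

Definition reduced_alg (F : fieldType) (C : algebra F) : Prop :=
  forall (x : C) (n : nat), apow x n = 0 -> x = 0.

(* An algebra morphism phi : A -> C[x], written through its coefficient maps:
   phi a = \sum_k (phik k a) x^k.  C[x] is the algebra of finitely supported
   coefficient sequences in C, with the Cauchy product. *)
Definition poly_morphism (F : fieldType) (A C : algebra F)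
    (phik : nat -> A -> C) : Prop :=
  [/\ forall k (a b : A), phik k (a + b) = phik k a + phik k b,
      forall k (c : F) (a : A), phik k (c *: a) = c *: phik k a,
      forall a : A, exists N, forall k, (N <= k)%N -> phik k a = 0 &
      forall n (a b : A),
        phik n (amul a b) =
          \sum_(i < n.+1) amul (phik i a) (phik (n - i)%N b)].

Definition unit_preserving (F : fieldType) (A C : ualgebra F)
    (phik : nat -> A -> C) : Prop :=
  phik 0%N (aone A) = aone C /\ forall k, (0 < k)%N -> phik k (aone A) = 0.

Definition const_image (F : fieldType) (A C : algebra F)
    (phik : nat -> A -> C) (a : A) : Prop :=
  forall k, (0 < k)%N -> phik k a = 0.

Definition Pc (F : fieldType) (A : algebra F) (a : A) : Prop :=
  forall (C : algebra F) (phik : nat -> A -> C),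
    commutative_alg C -> poly_morphism phik -> const_image phik a.

Definition Pcr (F : fieldType) (A : algebra F) (a : A) : Prop :=
  forall (C : algebra F) (phik : nat -> A -> C),
    commutative_alg C -> reduced_alg C ->
    poly_morphism phik -> const_image phik a.

Definition Pcu (F : fieldType) (A : ualgebra F) (a : A) : Prop :=
  forall (C : ualgebra F) (phik : nat -> A -> C),
    commutative_alg C -> poly_morphism phik -> unit_preserving phik ->
    const_image phik a.

Definition Pcur (F : fieldType) (A : ualgebra F) (a : A) : Prop :=
  forall (C : ualgebra F) (phik : nat -> A -> C),
    commutative_alg C -> reduced_alg C ->
    poly_morphism phik -> unit_preserving phik ->
    const_image phik a.

(* Main.v *)
Require Import Defs.
From HB Require Import structures.
From mathcomp Require Import all_boot all_order all_algebra.
From mathcomp Require Import zify.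
Set Implicit Arguments. Unset Strict Implicit. Unset Printing Implicit Defensive.
Import GRing.Theory.
Local Open Scope ring_scope.

Section Basic.
Variables (F : fieldType) (C : algebra F).
Lemma amul0r (x : C) : amul x 0 = 0.
Proof. by have := amulZr 0 x 0; rewrite !scale0r. Qed.
Lemma amul0l (x : C) : amul 0 x = 0.
Proof. by have := amulZl 0 0 x; rewrite !scale0r. Qed.
Lemma amulNr (x y : C) : amul x (- y) = - amul x y.
Proof. by rewrite -scaleN1r amulZr scaleN1r. Qed.
End Basic.

Definition corner (F : fieldType) (C : algebra F) (e : C) :=
  {x : C | amul e x == x}.

Section Corner.
Variables (F : fieldType) (C : algebra F) (e : C).
Local Notation D := (corner e).

HB.instance Definition _ := Choice.copy D {x : C | amul e x == x}.

Lemma cz : amul e 0 == 0. Proof. by rewrite amul0r. Qed.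
Lemma cadd (x y : D) : amul e (val x + val y) == val x + val y.
Proof. by case: x => x hx; case: y => y hy /=; move/eqP: hx => hx; move/eqP: hy => hy; rewrite amulDr /= hx hy. Qed.
Lemma copp (x : D) : amul e (- val x) == - val x.
Proof. by case: x => x hx /=; move/eqP: hx => hx; rewrite amulNr /= hx. Qed.
Lemma cscale k (x : D) : amul e (k *: val x) == k *: val x.
Proof. by case: x => x hx /=; move/eqP: hx => hx; rewrite amulZr /= hx. Qed.
Lemma cmul (x y : D) : amul e (amul (val x) (val y)) == amul (val x) (val y).
Proof. by case: x => x hx /=; move/eqP: hx => hx; rewrite amulA /= hx. Qed.

Definition czero : D := exist (fun z => amul e z == z) 0 cz.
Definition cadd_op (x y : D) : D := exist (fun z => amul e z == z) _ (cadd x y).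
Definition copp_op (x : D) : D := exist (fun z => amul e z == z) _ (copp x).
Definition cscale_op k (x : D) : D := exist (fun z => amul e z == z) _ (cscale k x).
Definition cmul_op (x y : D) : D := exist (fun z => amul e z == z) _ (cmul x y).

Lemma caddA : associative cadd_op.
Proof. by move=> x y z; apply: val_inj; rewrite /= addrA. Qed.
Lemma caddC : commutative cadd_op.
Proof. by move=> x y; apply: val_inj; rewrite /= addrC. Qed.
Lemma cadd0 : left_id czero cadd_op.
Proof. by move=> x; apply: val_inj; rewrite /= add0r. Qed.
Lemma caddN : left_inverse czero copp_op cadd_op.
Proof. by move=> x; apply: val_inj; rewrite /= addNr. Qed.

HB.instance Definition _ := GRing.isZmodule.Build D caddA caddC cadd0 caddN.

Lemma cscaleA a b (v : D) : cscale_op a (cscale_op b v) = cscale_op (a * b) v.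
Proof. by apply: val_inj; rewrite /= scalerA. Qed.
Lemma cscale1 : left_id 1 cscale_op.
Proof. by move=> x; apply: val_inj; rewrite /= scale1r. Qed.
Lemma cscaleDr : right_distributive cscale_op +%R.
Proof. by move=> a x y; apply: val_inj; rewrite /= scalerDr. Qed.
Lemma cscaleDl (v : D) : {morph cscale_op^~ v: a b / a + b}.
Proof. by move=> a b; apply: val_inj; rewrite /= scalerDl. Qed.

HB.instance Definition _ := GRing.Zmodule_isLmodule.Build F D cscaleA cscale1 cscaleDr cscaleDl.

Lemma cmulA (x y z : D) : cmul_op x (cmul_op y z) = cmul_op (cmul_op x y) z.
Proof. by apply: val_inj; rewrite /= amulA. Qed.
Lemma cmulDl (x y z : D) : cmul_op (x + y) z = cmul_op x z + cmul_op y z.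
Proof. by apply: val_inj; rewrite /= amulDl. Qed.
Lemma cmulDr (x y z : D) : cmul_op x (y + z) = cmul_op x y + cmul_op x z.
Proof. by apply: val_inj; rewrite /= amulDr. Qed.
Lemma cmulZl k (x y : D) : cmul_op (k *: x) y = k *: cmul_op x y.
Proof. by apply: val_inj; rewrite /= amulZl. Qed.
Lemma cmulZr k (x y : D) : cmul_op x (k *: y) = k *: cmul_op x y.
Proof. by apply: val_inj; rewrite /= amulZr. Qed.

Definition calg : algebra F := Algebra cmulA cmulDl cmulDr cmulZl cmulZr.

Hypothesis ee : amul e e = e.
Lemma ein : amul e e == e. Proof. by rewrite ee. Qed.
Definition cone : calg := exist (fun z => amul e z == z) e ein.
Lemma cmul1l (x : calg) : amul cone x = x.
Proof. by apply: val_inj; case: x => x hx /=; move/eqP: hx => hx; rewrite /= hx. Qed.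
Hypothesis comm : commutative_alg C.
Lemma cmul1r (x : calg) : amul x cone = x.
Proof. by apply: val_inj; case: x => x hx /=; move/eqP: hx => hx; rewrite /= comm hx. Qed.

Definition cualg : ualgebra F := UAlgebra cmul1l cmul1r.

Lemma ccomm : commutative_alg cualg.
Proof. by move=> x y; apply: val_inj; rewrite /= comm. Qed.

Lemma capow (x : cualg) n : val (apow x n) = apow (val x) n.
Proof.
elim: n => // n IH.
change (val (amul x (apow x n)) = amul (val x) (apow (val x) n)).
by rewrite -IH.
Qed.

Lemma creduced : reduced_alg C -> reduced_alg cualg.
Proof.
move=> red x n h; apply: val_inj => /=; apply: (red _ n).
by rewrite -capow h.
Qed.
End Corner.

Section Main.
Variables (F : fieldType) (A : ualgebra F) (C : algebra F) (phik : nat -> A -> C).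
Hypotheses (comm : commutative_alg C) (pm : poly_morphism phik).

Local Notation c := (fun k => phik k (aone A)).

Lemma c_idem : amul (c 0%N) (c 0%N) = c 0%N.
Proof.
case: pm => _ _ _ hm.
by rewrite -{3}(amul1l (aone A)) hm big_ord_recl big_ord0 addr0.
Qed.

Lemma c_high n : (0 < n)%N -> c n = 0.
Proof.
elim: n {-2}n (leqnn n) => [|N IH] n hn hpos; first by case: n hn hpos.
case: pm => _ _ _ hm.
case: n hn hpos => // m hm1 _.
have h2 : c m.+1 = amul (c 0%N) (c m.+1) + amul (c 0%N) (c m.+1).
  rewrite -{1}(amul1l (aone A)) hm big_ord_recl big_ord_recr /=.
  rewrite big1 ?add0r; last first.
    move=> i _; rewrite IH ?amul0l //=.
    by rewrite /bump /=; move: (ltn_ord i) hm1; lia.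
  by rewrite /bump /= subn0 subnn comm.
have h3 : amul (c 0%N) (c m.+1) = 0.
  have := congr1 (amul (c 0%N)) h2.
  rewrite amulDr !amulA c_idem.
  by move=> h; apply: (@addrI _ (amul (c 0%N) (c m.+1))); rewrite addr0 -h.
by rewrite h2 h3 addr0.
Qed.

Lemma c_left k a : phik k a = amul (c 0%N) (phik k a).
Proof.
case: pm => _ _ _ hm.
rewrite -{1}(amul1l a) hm big_ord_recl big1 ?addr0 ?subn0 //.
by move=> i _; rewrite c_high ?amul0l.
Qed.
Lemma c_in k a : amul (c 0%N) (phik k a) == phik k a.
Proof. by rewrite -c_left. Qed.

Definition psi k a : cualg c_idem comm := exist (fun z => amul (c 0%N) z == z) _ (c_in k a).

Lemma psi_val k a : sval (psi k a) = phik k a.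
Proof. by []. Qed.

Lemma psi_pm : poly_morphism psi.
Proof.
case: pm => h1 h2 h3 h4; split.
- by move=> k a b; apply: val_inj; rewrite /= h1.
- by move=> k x a; apply: val_inj; rewrite /= h2.
- move=> a; case: (h3 a) => N hN; exists N => k hk; apply: val_inj.
  by rewrite /= hN.
- move=> n a b; apply: val_inj; rewrite /= h4.
  by rewrite (big_morph (@sval _ _) (fun x y => erefl) (erefl)).
Qed.

Lemma psi_up : unit_preserving psi.
Proof.
split; first by apply: val_inj.
by move=> k hk; apply: val_inj; rewrite /= c_high.
Qed.
End Main.

Theorem mainTheorem10 (F : fieldType) (A : ualgebra F) :
  (forall a : A, @Pc F (ualg A) a <-> Pcu a) /\
  (forall a : A, @Pcr F (ualg A) a <-> Pcur a).
Proof.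
split=> a; split.
- by move=> h C phik hc hpm _; exact: h.
- move=> h C phik hc hpm k hk.
  have := h _ (psi hc hpm); rewrite /const_image.
  move=> /(_ (@ccomm _ _ _ _ _) (psi_pm hc hpm) (psi_up hc hpm) k hk).
  by move/(congr1 (@sval _ _)).
- by move=> h C phik hc hr hpm _; exact: h.
- move=> h C phik hc hr hpm k hk.
  have := h _ (psi hc hpm); rewrite /const_image.
  move=> /(_ (@ccomm _ _ _ _ _) (@creduced _ _ _ (c_idem hc hpm) hc hr) (psi_pm hc hpm) (psi_up hc hpm) k hk).
  by move/(congr1 (@sval _ _)).
Qed.
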